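(* Assume the subexponential regime $a_T/T\to0$. Then the SVP predictor $\hat c_{\mathrm V}(x,\mathbb P,T)=c(x,\mathbb P)+\sqrt{\frac{2a_T}{T}\mathrm{Var}_{\mathbb P}(\ell(x,\xi))}$ satisfies the out-of-sample guarantee with speed $(a_T)$.
   Context: Setting: $\Sigma=\{1,\dots,d\}$ ($d\ge2$) is finite; $\mathcal P\subset\mathbb R^d$ is the probability simplex over $\Sigma$ and $\mathcal P^o$ its relative interior (all entries positive). $\mathcal X\subset\mathbb R^n$ is compact and $\ell:\mathcal X\times\Sigma\to\mathbb R$ is continuous in $x$ for each $i$. For $x\in\mathcal X$, $\mu\in\mathbb R^d$ let $c(x,\mu)=\sum_{i\in\Sigma}\ell(x,i)\mu(i)$, and $\mathrm{Var}_{\mathbb P}(\ell(x,\xi))=\sum_i\mathbb P(i)(\ell(x,i)-c(x,\mathbb P))^2$. Data $\xi_1,\xi_2,\dots$ are i.i.d. with law $\mathbb P\in\mathcal P$, $\mathbb P^\infty$ denotes their joint law, and $\hat{\mathbb P}_T(i)=\frac1T\sum_{t=1}^T\mathbf 1\{\xi_t=i\}$. $(a_T)_{T\ge1}$ is a sequence of positive reals with $a_T\to\infty$. Out-of-sample guarantee with speed $(a_T)$ for a predictor $\hat c$ (a sequence of functions $\hat c(\cdot,\cdot,T):\mathcal X\times\mathcal P\to\mathbb R$): for all $x\in\mathcal X$ and $\mathbb P\in\mathcal P^o$, $\limsup_{T\to\infty}\frac1{a_T}\log\mathbb P^\infty\big(c(x,\mathbb P)>\hat c(x,\hat{\mathbb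 P}_T,T)\big)\le-1$. *)

(* Defs.v *)
From HB Require Import structures.
From mathcomp Require Import all_boot all_order all_algebra.
From mathcomp Require Import all_classical all_reals all_analysis.
Set Implicit Arguments. Unset Strict Implicit. Unset Printing Implicit Defensive.
Import Order.TTheory GRing.Theory Num.Theory.
Import numFieldNormedType.Exports.
Local Open Scope ring_scope.

Section Defs.
Variables (R : realType) (d n : nat).
Implicit Types (x : 'rV[R]_n) (ell : 'rV[R]_n -> 'I_d -> R) (mu : 'I_d -> R).

Definition simplex (mu : 'I_d -> R) : Prop :=
  (forall i, 0 <= mu i) /\ \sum_i mu i = 1.
Definition simplex_int (mu : 'I_d -> R) : Prop :=
  (forall i, 0 < mu i) /\ \sum_i mu i = 1.

Definition cost ell x mu : R := \sum_i ell x i * mu i.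

Definition variance ell x mu : R :=
  \sum_i mu i * (ell x i - cost ell x mu) ^+ 2.

Definition svp (a : nat -> R) ell x mu (T : nat) : R :=
  cost ell x mu + Num.sqrt (2 * a T / T%:R * variance ell x mu).

Definition empirical (T : nat) (xi : {ffun 'I_T -> 'I_d}) : 'I_d -> R :=
  fun i => (#|[set t | xi t == i]|)%:R / T%:R.

(* P^infty(E) for an event E depending only on (xi_1,...,xi_T):
   the i.i.d. product law of the first T coordinates. *)
Definition iid_prob (P : 'I_d -> R) (T : nat) (E : {ffun 'I_T -> 'I_d} -> bool) : R :=
  \sum_(xi : {ffun 'I_T -> 'I_d} | E xi) \prod_(t < T) P (xi t).

End Defs.

Definition elog (R : realType) (p : R) : \bar R :=
  if p <= 0 then -oo%E else (ln p)%:E.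

(* Main.v *)
Require Import Defs.
From HB Require Import structures.
From mathcomp Require Import all_boot all_order all_algebra.
From mathcomp Require Import all_classical all_reals all_analysis.
From mathcomp Require Import ring lra.
Import Order.TTheory GRing.Theory Num.Theory.
Import numFieldNormedType.Exports.
Local Open Scope ring_scope.
Local Open Scope classical_set_scope.

Section Aux.
Variable R : realType.
Lemma expR_le_neg (u : R) : u <= 0 -> expR u <= 1 + u + u ^+ 2 / 2.
Proof.
move=> u0.
case: (eqVneq u 0) => [->|ult]; first by rewrite expR0 expr2 !mul0r !addr0.
have ul : u < 0 by rewrite lt_neqAle ult.
pose f : R -> R := (cst 1 + id + 2^-1 \*: (id * id)) - expR.
have df : forall y : R, is_derive y 1 f (1 + y - expR y).
  move=> y; rewrite /f.
  have H := is_deriveB (is_deriveD (is_deriveD (is_derive_cst (1:R) y 1) (is_derive_id y 1))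
     (is_deriveZ (2^-1) (is_deriveM (is_derive_id y 1) (is_derive_id y 1)))) (is_derive_expR y).
  apply: (is_derive_eq H).
  rewrite add0r /GRing.scale /= !mulr1; by field.
have [] := @MVT R f (fun y => 1 + y - expR y) _ _ ul (fun y _ => df y).
  apply: continuous_subspaceT => y.
  apply: differentiable_continuous; apply/derivable1_diffP; by case: (df y).
move=> c; rewrite in_itv/= => /andP[uc c0].
have fE y : f y = 1 + y + 2^-1 * (y * y) - expR y by [].
rewrite !fE expR0 => H2.
have : 1 + c - expR c <= 0 by rewrite subr_le0 expR_ge1Dx.
move=> H1.
have H3 : (1 + c - expR c) * (0 - u) <= 0 by rewrite mulr_le0_ge0 // sub0r oppr_ge0.
rewrite expr2; lra.
Qed.

Lemma expR_le_pos (u : R) : 0 <= u -> expR u * (1 - u ^+ 2 / 2) <= 1 + u.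
Proof.
move=> u0.
case: (eqVneq u 0) => [->|ult]; first by rewrite expR0 expr2 !mul0r subr0 mulr1 addr0.
have ul : 0 < u by rewrite lt_neqAle eq_sym ult.
pose f : R -> R := (cst 1 + id) - expR * (cst 1 - 2^-1 \*: (id * id)).
have df : forall y : R, is_derive y 1 f (1 - (expR y * (- y) + (1 - 2^-1 * (y * y)) * expR y)).
  move=> y; rewrite /f.
  have H := is_deriveB (is_deriveD (is_derive_cst (1:R) y 1) (is_derive_id y 1))
     (is_deriveM (is_derive_expR y) (is_deriveB (is_derive_cst (1:R) y 1)
     (is_deriveZ (2^-1) (is_deriveM (is_derive_id y 1) (is_derive_id y 1))))).
  apply: (is_derive_eq H).
  rewrite add0r /GRing.scale /= !mulr1.
  rewrite [X in X * expR y](_ : _ = 1 - 2^-1 * (y * y)) //; by field.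
have [] := @MVT R f _ _ _ ul (fun y _ => df y).
  apply: continuous_subspaceT => y.
  apply: differentiable_continuous; apply/derivable1_diffP; by case: (df y).
move=> c; rewrite in_itv/= => /andP[c0 cu].
have fE y : f y = 1 + y - expR y * (1 - 2^-1 * (y * y)) by [].
rewrite !fE expR0 => H2.
have H1 : expR c * (1 - c) <= 1.
  have := expR_ge1Dx (- c); rewrite -(expRxMexpNx_1 c) => H.
  have ec := expR_gt0 c.
  nra.
have ec := expR_gt0 c.
have H3 : 0 <= (1 - (expR c * (- c) + (1 - 2^-1 * (c * c)) * expR c)) * (u - 0).
  apply: mulr_ge0; last by rewrite subr0 ltW.
  nra.
rewrite expr2; lra.
Qed.

Lemma expR_quad (u B : R) : `|u| <= B -> expR u <= 1 + u + u ^+ 2 * expR B / 2.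
Proof.
move=> uB.
have B0 : 0 <= B by apply: le_trans uB.
have eB : 1 <= expR B by rewrite -expR0 ler_expR.
have u2 : 0 <= u ^+ 2 by rewrite sqr_ge0.
case: (lerP u 0) => u0.
  apply: le_trans (@expR_le_neg u u0) _.
  rewrite lerD2l ler_pM2r ?invr_gt0 ?ltr0n //.
  by rewrite -[X in X <= _]mulr1 ler_wpM2l.
have H := @expR_le_pos u (ltW u0).
have euB : expR u <= expR B by rewrite ler_expR (le_trans _ uB) // ler_norm.
have eu := expR_gt0 u.
have : u ^+ 2 * expR u <= u ^+ 2 * expR B by rewrite ler_wpM2l.
nra.
Qed.

Lemma expR_small (u : R) : 0 <= u -> u <= 2^-1 -> expR u <= 1 + 2 * u.
Proof.
move=> u0 u1.
have H := expR_ge1Dx (- u).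
have E := expRxMexpNx_1 u.
have eu := expR_gt0 u.
have H2 : expR u * (1 - u) <= 1.
  by rewrite -[X in _ <= X]E; apply: ler_wpM2l; [exact: ltW|].
nra.
Qed.

End Aux.

Local Close Scope classical_set_scope.
Section Comb.
Variables (R : realType) (d : nat).

Lemma sum_ffun_prod T (F : 'I_d -> R) :
  \sum_(xi : {ffun 'I_T -> 'I_d}) \prod_(t < T) F (xi t) = (\sum_i F i) ^+ T.
Proof.
rewrite -(bigA_distr_bigA (fun (t : 'I_T) (i : 'I_d) => F i)) /=.
by rewrite prodr_const card_ord.
Qed.


Lemma chernoff (P : 'I_d -> R) (hP : forall i, 0 <= P i) T (g : 'I_d -> R) (t l : R) :
  0 <= l ->
  iid_prob P (fun xi : {ffun 'I_T -> 'I_d} => T%:R * t <= \sum_(s < T) g (xi s)) <=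
  expR (- (l * (T%:R * t))) * (\sum_i P i * expR (l * g i)) ^+ T.
Proof.
move=> l0; rewrite /iid_prob.
have pos xi : 0 <= \prod_(s < T) P (xi s) by apply: prodr_ge0 => s _.
apply: (@le_trans _ _ (\sum_(xi : {ffun 'I_T -> 'I_d})
   \prod_(s < T) P (xi s) * expR (l * (\sum_(s < T) g (xi s) - T%:R * t)))).
  rewrite [X in _ <= X](bigID (fun xi : {ffun 'I_T -> 'I_d} => T%:R * t <= \sum_(s < T) g (xi s))) /=.
  apply: ler_wpDr; first by apply: sumr_ge0 => xi _; rewrite mulr_ge0 // expR_ge0.
  apply: ler_sum => xi E.
  rewrite -[X in X <= _]mulr1 ler_wpM2l // -[X in X <= expR _]expR0 ler_expR.
  by rewrite mulr_ge0 // subr_ge0.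
rewrite -(sum_ffun_prod T (fun i => P i * expR (l * g i))) mulr_sumr; apply: ler_sum => xi _.
rewrite big_split /= mulrDr expRD mulrN mulr_sumr expR_sum.
rewrite le_eqVlt; apply/orP; left; apply/eqP.
ring.
Qed.

Lemma mgf_bound (P : 'I_d -> R) (hP : forall i, 0 <= P i) (hs : \sum_i P i = 1)
  (g : 'I_d -> R) (B l : R) :
  \sum_i P i * g i = 0 -> (forall i, `|g i| <= B) -> 0 <= l ->
  \sum_i P i * expR (l * g i) <= 1 + l ^+ 2 * expR (l * B) / 2 * \sum_i P i * g i ^+ 2.
Proof.
move=> hm hB l0.
apply: (@le_trans _ _ (\sum_i P i * (1 + l * g i + (l * g i) ^+ 2 * expR (l * B) / 2))).
  apply: ler_sum => i _; apply: ler_wpM2l => //; apply: expR_quad.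
  by rewrite normrM ger0_norm // ler_wpM2l.
under eq_bigr do rewrite !mulrDr.
rewrite !big_split /=.
have E1 : \sum_i P i * 1 = 1 by rewrite -[RHS]hs; apply: eq_bigr => i _; rewrite mulr1.
have E2 : \sum_i P i * (l * g i) = 0.
  transitivity (l * \sum_i P i * g i); last by rewrite hm mulr0.
  by rewrite mulr_sumr; apply: eq_bigr => i _; rewrite mulrCA.
have E3 : \sum_i P i * ((l * g i) ^+ 2 * expR (l * B) / 2) =
    l ^+ 2 * expR (l * B) / 2 * \sum_i P i * g i ^+ 2.
  by rewrite mulr_sumr; apply: eq_bigr => i _; rewrite exprMn; ring.
by rewrite E1 E2 E3 addr0.
Qed.

Lemma chernoff2 (P : 'I_d -> R) (hP : forall i, 0 <= P i) (hs : \sum_i P i = 1)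
  T (g : 'I_d -> R) (B t l : R) :
  \sum_i P i * g i = 0 -> (forall i, `|g i| <= B) -> 0 <= l ->
  iid_prob P (fun xi : {ffun 'I_T -> 'I_d} => T%:R * t <= \sum_(s < T) g (xi s)) <=
  expR (T%:R * (l ^+ 2 * expR (l * B) / 2 * (\sum_i P i * g i ^+ 2) - l * t)).
Proof.
move=> hm hB l0.
apply: le_trans (@chernoff P hP T g t l l0) _.
set y := l ^+ 2 * expR (l * B) / 2 * (\sum_i P i * g i ^+ 2).
have M0 : 0 <= \sum_i P i * expR (l * g i).
  by apply: sumr_ge0 => i _; rewrite mulr_ge0 // expR_ge0.
have My : \sum_i P i * expR (l * g i) <= expR y.
  apply: le_trans (@mgf_bound P hP hs g B l hm hB l0) _.
  exact: expR_ge1Dx.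
have : (\sum_i P i * expR (l * g i)) ^+ T <= expR y ^+ T.
  by apply: lerXn2r => //; rewrite nnegrE ?expR_ge0.
rewrite -expRM_natl => HT.
apply: le_trans (ler_wpM2l (expR_ge0 _) HT) _.
rewrite -expRD le_eqVlt; apply/orP; left; apply/eqP; congr expR; ring.
Qed.

Lemma fixed_dev (P : 'I_d -> R) (hP : forall i, 0 <= P i) (hs : \sum_i P i = 1)
  (g : 'I_d -> R) (B t : R) :
  \sum_i P i * g i = 0 -> (forall i, `|g i| <= B) -> 0 < t ->
  exists c, 0 < c /\ forall T,
  iid_prob P (fun xi : {ffun 'I_T -> 'I_d} => T%:R * t <= \sum_(s < T) g (xi s)) <=
  expR (- (T%:R * c)).
Proof.
move=> hm hB t0.
set B1 := `|B|.
have B10 : 0 <= B1 by rewrite normr_ge0.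
have hB1 i : `|g i| <= B1 by apply: le_trans (hB i) (ler_norm _).
set v := \sum_i P i * g i ^+ 2.
have v0 : 0 <= v by apply: sumr_ge0 => i _; rewrite mulr_ge0 // sqr_ge0.
set a1 := t / (t + 1).
set a2 := (3 * (v + 1))^-1.
set a3 := (2 * B1 + 1)^-1.
have e1 : a1 * (t + 1) = t by rewrite /a1 mulfVK // gt_eqF // ltr_wpDl // ltW.
have e2 : a2 * (3 * (v + 1)) = 1 by rewrite /a2 mulVf // gt_eqF // mulr_gt0 // ltr_wpDl.
have e3 : a3 * (2 * B1 + 1) = 1 by rewrite /a3 mulVf // gt_eqF // ltr_wpDl // mulr_ge0.
have a10 : 0 <= a1 by rewrite /a1 divr_ge0 // ?addr_ge0 // ltW.
have a20 : 0 <= a2 by rewrite /a2 invr_ge0 mulr_ge0 // addr_ge0.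
have a30 : 0 <= a3 by rewrite /a3 invr_ge0 addr_ge0 // mulr_ge0.
have a11 : a1 <= 1 by nra.
have a21 : a2 <= 1 by nra.
have a31 : a3 <= 1 by nra.
have a1t : a1 <= t by nra.
set l := a1 * a2 * a3.
have l0 : 0 <= l by apply: mulr_ge0 => //; apply: mulr_ge0.
have lB : l * B1 <= 2^-1.
  have : a3 * B1 <= 2^-1 by nra.
  have h12 : a1 * a2 <= 1 by nra.
  have h3 : 0 <= a3 * B1 by apply: mulr_ge0.
  have : l * B1 <= a3 * B1 by rewrite /l; nra.
  lra.
have lv : l * v <= t / 3.
  have h1 : a2 * v <= 3^-1 by nra.
  have h2 : 0 <= a2 * v by apply: mulr_ge0.
  have h3 : a1 * a3 <= t by nra.
  have h4 : 0 <= a1 * a3 by apply: mulr_ge0.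
  have -> : l * v = (a1 * a3) * (a2 * v) by rewrite /l; ring.
  exact: ler_pM.
have eB : expR (l * B1) <= 2.
  apply: le_trans (@expR_small R (l * B1) (mulr_ge0 l0 B10) lB) _; lra.
have a1p : 0 < a1 by rewrite /a1 divr_gt0 // ltr_wpDl // ltW.
have a2p : 0 < a2 by rewrite /a2 invr_gt0 mulr_gt0 // ltr_wpDl.
have a3p : 0 < a3 by rewrite /a3 invr_gt0 ltr_wpDl // mulr_ge0.
have lp : 0 < l by apply: mulr_gt0 => //; apply: mulr_gt0.
exists (l * t / 2); split; first by apply: mulr_gt0 => //; apply: mulr_gt0.
move=> T.
apply: le_trans (@chernoff2 P hP hs T g B1 t l hm hB1 l0) _.
rewrite ler_expR -[X in _ <= X]mulrN ler_wpM2l ?ler0n // -/v.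
have l2v : 0 <= l ^+ 2 * v by rewrite mulr_ge0 // sqr_ge0.
have h1 : l ^+ 2 * expR (l * B1) / 2 * v <= l ^+ 2 * v.
  have -> : l ^+ 2 * expR (l * B1) / 2 * v = (l ^+ 2 * v) * (expR (l * B1) / 2) by ring.
  rewrite -[X in _ <= X]mulr1 ler_wpM2l //; lra.
have h2 : l ^+ 2 * v <= l * (t / 3) by rewrite expr2 -mulrA ler_wpM2l.
lra.
Qed.


Lemma key_impl n (ell : 'rV[R]_n -> 'I_d -> R) (x : 'rV[R]_n) (P mu : 'I_d -> R) (k δ : R) :
  \sum_i mu i = 1 -> 0 <= k -> 0 <= δ -> 0 <= Defs.variance ell x P ->
  cost ell x mu + Num.sqrt (k * Defs.variance ell x mu) < cost ell x P ->
  [\/ Num.sqrt (k * (Defs.variance ell x P * (1 - δ))) <=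
         \sum_i mu i * (cost ell x P - ell x i),
      Defs.variance ell x P * δ / 2 <=
         \sum_i mu i * (Defs.variance ell x P - (cost ell x P - ell x i) ^+ 2),
      Num.sqrt (Defs.variance ell x P * δ / 2) <= \sum_i mu i * (cost ell x P - ell x i) |
      Num.sqrt (Defs.variance ell x P * δ / 2) <= \sum_i mu i * - (cost ell x P - ell x i)].
Proof.
move=> hmu k0 d0 v0 hev.
set m := cost ell x P; set v := Defs.variance ell x P.
set D := \sum_i mu i * (m - ell x i).
set W := \sum_i mu i * (m - ell x i) ^+ 2.
have hc : cost ell x mu = m - D.
  rewrite /D /cost.
  under [in RHS]eq_bigr do rewrite mulrBr.
  rewrite big_split /= sumrN -mulr_suml hmu mul1r.
  under eq_bigr do rewrite mulrC.
  lra.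
have hvar : Defs.variance ell x mu = W - D ^+ 2.
  rewrite /Defs.variance hc.
  transitivity (\sum_i (D ^+ 2 * mu i - 2 * D * (mu i * (m - ell x i)) + mu i * (m - ell x i) ^+ 2)).
    by apply: eq_bigr => i _; ring.
  rewrite !big_split /= sumrN -!mulr_sumr -/D -/W hmu; ring.
have hSv : \sum_i mu i * (v - (m - ell x i) ^+ 2) = v - W.
  transitivity (\sum_i (v * mu i - mu i * (m - ell x i) ^+ 2)).
    by apply: eq_bigr => i _; ring.
  by rewrite big_split /= sumrN -mulr_sumr hmu mulr1.
have hSn : \sum_i mu i * - (m - ell x i) = - D.
  by rewrite -sumrN; apply: eq_bigr => i _; rewrite mulrN.
have r0 : 0 <= v * δ / 2 by rewrite mulr_ge0 // ?mulr_ge0 // invr_ge0 ler0n.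
set r := Num.sqrt (v * δ / 2).
have rr : r ^+ 2 = v * δ / 2 by rewrite sqr_sqrtr.
have rge0 : 0 <= r := sqrtr_ge0 _.
case: (lerP (Num.sqrt (k * (v * (1 - δ)))) D) => h1; first by apply: Or41.
rewrite hSv; case: (lerP (v * δ / 2) (v - W)) => h2; first by apply: Or42.
case: (lerP r D) => h3; first by apply: Or43.
rewrite hSn; case: (lerP r (- D)) => h4; first by apply: Or44.
exfalso.
have hD2 : D ^+ 2 < v * δ / 2.
  have hp : 0 < (r - D) * (r + D) by apply: mulr_gt0; lra.
  have e : (r - D) * (r + D) = r ^+ 2 - D ^+ 2 by ring.
  rewrite -rr; lra.
have hvar' : k * (v * (1 - δ)) <= k * Defs.variance ell x mu.
  by apply: ler_wpM2l => //; rewrite hvar; lra.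
have := ler_wsqrtr hvar'.
move: hev; rewrite hc -/m; lra.
Qed.


Lemma count_sum T (xi : {ffun 'I_T -> 'I_d}) (f : 'I_d -> R) :
  \sum_(s < T) f (xi s) = \sum_i (#|[set t | xi t == i]|)%:R * f i.
Proof.
rewrite (partition_big (fun s => xi s) (fun _ => true)) //=.
apply: eq_bigr => i _.
rewrite (eq_bigr (fun _ => f i)); last by move=> s /eqP ->.
rewrite (eq_bigl (fun s => s \in [set t | xi t == i])); last by move=> s; rewrite inE.
by rewrite sumr_const mulr_natl.
Qed.

Lemma emp_sum T (hT : (0 < T)%N) (xi : {ffun 'I_T -> 'I_d}) (f : 'I_d -> R) :
  \sum_i @empirical R d T xi i * f i = (\sum_(s < T) f (xi s)) / T%:R.
Proof.
rewrite count_sum mulr_suml; apply: eq_bigr => i _.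
by rewrite /empirical mulrAC.
Qed.

Lemma emp_sum1 T (hT : (0 < T)%N) (xi : {ffun 'I_T -> 'I_d}) :
  \sum_i @empirical R d T xi i = 1.
Proof.
transitivity (\sum_i @empirical R d T xi i * 1).
  by apply: eq_bigr => i _; rewrite mulr1.
rewrite emp_sum // sumr_const card_ord divff //.
by rewrite pnatr_eq0 -lt0n.
Qed.

Lemma sum_g1 n (ell : 'rV[R]_n -> 'I_d -> R) (x : 'rV[R]_n) (P mu : 'I_d -> R) :
  \sum_i mu i = 1 ->
  \sum_i mu i * (cost ell x P - ell x i) = cost ell x P - cost ell x mu.
Proof.
move=> hmu; rewrite /cost.
under eq_bigr do rewrite mulrBr.
rewrite big_split /= sumrN -mulr_suml hmu mul1r.
by under [X in _ = _ - X]eq_bigr do rewrite mulrC.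
Qed.

Lemma abs_le_sum (f : 'I_d -> R) i : `|f i| <= \sum_j `|f j|.
Proof.
by rewrite (bigD1 i) //= ler_wpDr // sumr_ge0.
Qed.

Lemma union4 (P : 'I_d -> R) (hP : forall i, 0 <= P i) T
  (E E1 E2 E3 E4 : {ffun 'I_T -> 'I_d} -> bool) :
  (forall xi, E xi -> [|| E1 xi, E2 xi, E3 xi | E4 xi]) ->
  iid_prob P E <= iid_prob P E1 + iid_prob P E2 + iid_prob P E3 + iid_prob P E4.
Proof.
move=> H; rewrite /iid_prob (big_mkcond E) (big_mkcond E1) (big_mkcond E2) (big_mkcond E3) (big_mkcond E4) -!big_split /=.
apply: ler_sum => xi _.
have w0 : 0 <= \prod_(t < T) P (xi t) by apply: prodr_ge0.
case: (boolP (E xi)) => He; last first.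
  by rewrite !addr_ge0 //; case: ifP.
have := H xi He.
by case: (E1 xi); case: (E2 xi); case: (E3 xi); case: (E4 xi) => //= _; lra.
Qed.
End Comb.

Section Ana.
Variable R : realType.
Local Open Scope classical_set_scope.

Lemma esup_le (u : nat -> \bar R) (c : \bar R) :
  (exists N, forall n, (N <= n)%N -> (u n <= c)%E) -> (limn_esup u <= c)%E.
Proof.
move=> [N HN].
rewrite /limn_esup limf_esupE.
apply: (@le_trans _ _ (ereal_sup (u @` [set n | (N <= n)%N]))).
  apply: ereal_inf_lbound; exists [set n | (N <= n)%N] => //.
  by exists N.
by apply: ge_ereal_sup => _ [n /= Nn <-]; exact: HN.
Qed.

Lemma ev_le (f : nat -> R) : f @ \oo --> 0%R ->
  forall θ, (0 < θ)%R -> exists N, forall T, (N <= T)%N -> (f T <= θ)%R.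
Proof.
move=> /cvgrPdist_lt H θ θ0.
have [N _ HN] := H θ θ0.
exists N => T NT; have := HN T NT; rewrite /= sub0r normrN => h.
exact: le_trans (ler_norm _) (ltW h).
Qed.

Lemma ev_ge (a : nat -> R) : a @ \oo --> +oo ->
  forall M, exists N, forall T, (N <= T)%N -> (M <= a T)%R.
Proof.
move=> /cvgryPge H M.
have [N _ HN] := H M.
by exists N => T NT; exact: HN.
Qed.

End Ana.

Section Main.
Variable R : realType.
Variables (d n : nat).
Local Open Scope classical_set_scope.

Lemma MQ (ell : 'rV[R]_n -> 'I_d -> R) (x : 'rV[R]_n) (P : 'I_d -> R)
  (hP : simplex_int P) (a : nat -> R) (ha_pos : forall T, (0 < T)%N -> 0 < a T)
  (ha_sub : (fun T => a T / T%:R) @ \oo --> 0) (ε : R) (e0 : 0 < ε) (e1 : ε < 1) :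
  exists N, forall T, (N <= T)%N -> (0 < T)%N /\
   iid_prob P (fun xi : {ffun 'I_T -> 'I_d} =>
      svp a ell x (@empirical R d T xi) T < cost ell x P) <= 4 * expR (- ((1 - ε) * a T)).
Proof.
move: hP => [hPp hs].
have hP0 i : 0 <= P i := ltW (hPp i).
set m := cost ell x P.
set v := Defs.variance ell x P.
pose g1 := fun i => m - ell x i.
have hm1 : \sum_i P i * g1 i = 0 by rewrite /g1 sum_g1 // subrr.
have hv : v = \sum_i P i * g1 i ^+ 2.
  by rewrite /v /Defs.variance; apply: eq_bigr => i _; rewrite /g1 -sqrrN opprB.
have v0 : 0 <= v by rewrite hv; apply: sumr_ge0 => i _; rewrite mulr_ge0 // sqr_ge0.
have ex0 : forall T, 0 <= 4 * expR (- ((1 - ε) * a T)) by move=> T; rewrite mulr_ge0 // expR_ge0.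
case: (eqVneq v 0) => [v_eq0 | vne0].
  have g0 i : g1 i = 0.
    have := @psumr_eq0P _ _ xpredT (fun i => P i * g1 i ^+ 2) (fun i _ => mulr_ge0 (hP0 i) (sqr_ge0 (g1 i))).
    rewrite -hv => /(_ v_eq0 i isT) /eqP; rewrite mulf_eq0 sqrf_eq0 (gt_eqF (hPp i)) /=.
    by move/eqP.
  exists 1%N => T hT; split => //.
  rewrite /iid_prob big_pred0 //.
  move=> xi /=; apply/negbTE; rewrite -leNgt /svp.
  have := @sum_g1 R d n ell x P _ (@emp_sum1 R d T hT xi).
  rewrite (eq_bigr (fun _ => 0)); last by move=> i _; rewrite -/m -/(g1 i) g0 mulr0.
  rewrite big1 // -/m => /eqP; rewrite eq_sym subr_eq0 => /eqP <-.
  by rewrite lerDl sqrtr_ge0.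
have vp : 0 < v by rewrite lt_neqAle eq_sym vne0.
set δ := ε / 2.
have d0 : 0 < δ by rewrite /δ divr_gt0.
have d1 : δ < 2^-1 by rewrite /δ; lra.
set η := v * δ / 2.
have eta0 : 0 < η by rewrite /η !mulr_gt0 // invr_gt0 ltr0n.
set r := Num.sqrt η.
have r0 : 0 < r by rewrite /r sqrtr_gt0.
pose h := fun i => v - g1 i ^+ 2.
have hmh : \sum_i P i * h i = 0.
  transitivity (\sum_i (v * P i - P i * g1 i ^+ 2)).
    by apply: eq_bigr => i _; rewrite /h; ring.
  by rewrite big_split /= sumrN -mulr_sumr hs mulr1 -hv subrr.
have hmN : \sum_i P i * (fun i => - g1 i) i = 0.
  by rewrite /= (eq_bigr (fun i => - (P i * g1 i))) ?sumrN ?hm1 ?oppr0 // => i _; rewrite mulrN.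
have [c2 [c20 Hc2]] := @fixed_dev R d P hP0 hs h _ η hmh (fun i => @abs_le_sum R d h i) eta0.
have [c3 [c30 Hc3]] := @fixed_dev R d P hP0 hs g1 _ r hm1 (fun i => @abs_le_sum R d g1 i) r0.
have [c4 [c40 Hc4]] := @fixed_dev R d P hP0 hs (fun i => - g1 i) _ r hmN
   (fun i => @abs_le_sum R d (fun i => - g1 i) i) r0.
set B1 := \sum_j `|g1 j|.
have B10 : 0 <= B1 by apply: sumr_ge0.
set θ := δ ^+ 2 * v / (8 * (B1 ^+ 2 + 1)).
have θ0 : 0 < θ.
  rewrite /θ divr_gt0 //; first by rewrite mulr_gt0 // exprn_gt0.
  by rewrite mulr_gt0 // ltr_wpDl // sqr_ge0.
have [N1 HN1] := @ev_le R _ ha_sub _ θ0.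
have [N2 HN2] := @ev_le R _ ha_sub _ c20.
have [N3 HN3] := @ev_le R _ ha_sub _ c30.
have [N4 HN4] := @ev_le R _ ha_sub _ c40.
exists (maxn (maxn N1 N2) (maxn N3 N4)).+1 => T hT.
have T0 : (0 < T)%N by apply: leq_trans hT.
split => //.
have hmx : forall N, (N <= maxn (maxn N1 N2) (maxn N3 N4))%N -> (N <= T)%N.
  by move=> N HN; apply: leq_trans (ltnW hT).
have q1 : a T / T%:R <= _ := HN1 T (hmx N1 ltac:(by rewrite !leq_max leqnn ?orbT)).
have q2 : a T / T%:R <= _ := HN2 T (hmx N2 ltac:(by rewrite !leq_max leqnn ?orbT)).
have q3 : a T / T%:R <= _ := HN3 T (hmx N3 ltac:(by rewrite !leq_max leqnn ?orbT)).
have q4 : a T / T%:R <= _ := HN4 T (hmx N4 ltac:(by rewrite !leq_max leqnn ?orbT)).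
have aT : 0 < a T := ha_pos T T0.
have Tp : 0 < T%:R :> R by rewrite ltr0n.
set X := expR (- ((1 - ε) * a T)).
have fixed_ok c : 0 < c -> a T / T%:R <= c -> expR (- (T%:R * c)) <= X.
  move=> c0 q; rewrite /X ler_expR lerN2.
  rewrite ler_pdivrMr // in q.
  have : (1 - ε) * a T <= a T by rewrite ler_piMl // ?ltW //; lra.
  lra.
set k := 2 * a T / T%:R.
have k0 : 0 <= k by rewrite /k divr_ge0 // ?mulr_ge0 // ltW.
set s := Num.sqrt (k * (v * (1 - δ))).
pose E1 := fun xi : {ffun 'I_T -> 'I_d} => T%:R * s <= \sum_(t < T) g1 (xi t).
pose E2 := fun xi : {ffun 'I_T -> 'I_d} => T%:R * η <= \sum_(t < T) h (xi t).
pose E3 := fun xi : {ffun 'I_T -> 'I_d} => T%:R * r <= \sum_(t < T) g1 (xi t).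
pose E4 := fun xi : {ffun 'I_T -> 'I_d} => T%:R * r <= \sum_(t < T) (fun i => - g1 i) (xi t).
apply: le_trans (@union4 R d P hP0 T _ E1 E2 E3 E4 _) _.
  move=> xi Hev.
  have hmu := @emp_sum1 R d T T0 xi.
  have := @key_impl R d n ell x P (@empirical R d T xi) k δ hmu k0 (ltW d0) v0 Hev.
  rewrite !emp_sum // !ler_pdivlMr // ![_ * T%:R]mulrC.
  by case => H; [apply/or4P; apply: Or41 | apply/or4P; apply: Or42 | apply/or4P; apply: Or43 | apply/or4P; apply: Or44].
have b2 : iid_prob P E2 <= X := le_trans (Hc2 T) (fixed_ok _ c20 q2).
have b3 : iid_prob P E3 <= X := le_trans (Hc3 T) (fixed_ok _ c30 q3).
have b4 : iid_prob P E4 <= X := le_trans (Hc4 T) (fixed_ok _ c40 q4).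
suff b1 : iid_prob P E1 <= X by lra.
set K := k * (1 - δ).
have K0 : 0 <= K by rewrite /K mulr_ge0 //; lra.
have s0 : 0 <= s := sqrtr_ge0 _.
have ss : s ^+ 2 = K * v by rewrite /s sqr_sqrtr /K; [ring | rewrite mulr_ge0 // mulr_ge0 //; lra].
set l := s / v.
have l0 : 0 <= l by rewrite /l divr_ge0 // ltW.
have H1 : l ^+ 2 * v = K.
  rewrite /l expr_div_n ss; field; exact: vne0.
have H2 : l * s = K.
  rewrite /l mulrAC -expr2 ss; field; exact: vne0.
have H3 : T%:R * K = 2 * a T * (1 - δ).
  rewrite /K /k; field; by rewrite pnatr_eq0 -lt0n.
have hK : K * B1 ^+ 2 <= δ ^+ 2 * v / 4.
  have k2 : k = 2 * (a T / T%:R) by rewrite /k mulrA.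
  have Kk : K <= 2 * θ.
    have : K <= k by rewrite /K ler_piMr //; lra.
    rewrite k2; lra.
  have te : θ * (8 * (B1 ^+ 2 + 1)) = δ ^+ 2 * v.
    by rewrite /θ; field; rewrite gt_eqF // ltr_wpDl // sqr_ge0.
  have B2 : 0 <= B1 ^+ 2 := sqr_ge0 _.
  nra.
have lB : l * B1 <= δ / 2.
  have e : (l * B1) ^+ 2 * v = K * B1 ^+ 2 by rewrite exprMn -H1; ring.
  have lb0 : 0 <= l * B1 by rewrite mulr_ge0.
  have : (l * B1) ^+ 2 <= (δ / 2) ^+ 2.
    rewrite -(ler_pM2r vp) e; apply: le_trans hK _.
    rewrite le_eqVlt; apply/orP; left; apply/eqP; by field.
  move=> hh; nra.
have eB : expR (l * B1) <= 1 + δ.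
  apply: le_trans (@expR_small R (l * B1) (mulr_ge0 l0 B10) _) _; lra.
apply: le_trans (@chernoff2 R d P hP0 hs T g1 B1 s l hm1 (fun i => @abs_le_sum R d g1 i) l0) _.
rewrite -hv /X ler_expR.
have -> : l ^+ 2 * expR (l * B1) / 2 * v - l * s = (l ^+ 2 * v) * (expR (l * B1) / 2) - l * s by ring.
rewrite H1 H2.
have -> : T%:R * (K * (expR (l * B1) / 2) - K) = (T%:R * K) * (expR (l * B1) / 2 - 1) by ring.
rewrite H3.
have ad : 0 <= a T * (1 - δ) by rewrite mulr_ge0 ?ltW //; lra.
have ed : expR (l * B1) - 2 <= δ - 1 by lra.
have := ler_wpM2l ad ed.
have dd : 0 <= a T * δ ^+ 2 by apply: mulr_ge0; [exact: ltW | exact: sqr_ge0].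
rewrite /δ in dd ad *; nra.
Qed.

End Main.

Local Open Scope classical_set_scope.
Theorem mainTheorem6 (R : realType) (d n : nat) (hd : (2 <= d)%N)
    (X : set 'rV[R]_n) (hX : compact X)
    (ell : 'rV[R]_n -> 'I_d -> R)
    (hell : forall i, {within X, continuous (fun x => ell x i)})
    (a : nat -> R) (ha_pos : forall T, (0 < T)%N -> 0 < a T)
    (ha_inf : a @ \oo --> +oo)
    (ha_sub : (fun T => a T / T%:R) @ \oo --> 0) :
  forall x, X x -> forall P : 'I_d -> R, simplex_int P ->
    (limn_esup (fun T : nat =>
       (elog (iid_prob P (fun xi : {ffun 'I_T -> 'I_d} =>
                 svp a ell x (@empirical R d T xi) T < cost ell x P)%R)
        * ((a T)^-1)%:E)%E) <= (-1)%:E)%E.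
Proof.
move=> x _ P hP.
apply/lee_addgt0Pr => e e0.
set ε := e / (e + 2).
have e20 : 0 < e + 2 by lra.
have eps0 : 0 < ε by rewrite /ε divr_gt0.
have eps1 : ε < 1 by rewrite /ε ltr_pdivrMr // mul1r; lra.
have eps2 : 2 * ε <= e.
  rewrite /ε mulrA ler_pdivrMr //; nra.
have [N HN] := @MQ R d n ell x P hP a ha_pos ha_sub ε eps0 eps1.
have [N' HN'] := @ev_ge R a ha_inf (ln 4 / ε).
apply: esup_le; exists (maxn N N') => T hT.
have [T0 hp] := HN T (leq_trans (leq_maxl _ _) hT).
have haT : ln 4 / ε <= a T := HN' T (leq_trans (leq_maxr _ _) hT).
have aT : 0 < a T := ha_pos T T0.
set p := iid_prob P _.
rewrite /elog; case: ifPn => hp0.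
  by rewrite gt0_mulNye ?lte_fin ?invr_gt0 // leNye.
rewrite -ltNge in hp0.
rewrite -EFinM -EFinD lee_fin.
set Y := expR (- ((1 - ε) * a T)).
have Y0 : 0 < Y := expR_gt0 _.
have L : ln p <= ln 4 - (1 - ε) * a T.
  have -> : ln 4 - (1 - ε) * a T = ln (4 * Y).
    by rewrite lnM ?posrE ?ltr0n // /Y expRK.
  by rewrite ler_ln // posrE mulr_gt0 ?ltr0n.
have l4 : ln 4 <= ε * a T by move: haT; rewrite ler_pdivrMr // mulrC.
rewrite ler_pdivrMr //.
have : ε * a T <= (e - ε) * a T by rewrite ler_pM2r //; lra.
lra.
Qed.
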